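(* Let $k\geq0$, $q\geq1$, $m\ge1$ and $\gamma=(\gamma_1,\ldots,\gamma_m)\in\mathbb{Z}^m$ with $\gamma_1\ge 2$ and $2\le\gamma_{i+1}\le\gamma_i+1$ for all $1\le i<m$. Then $F^{1234}(k,q,\gamma)=F^{2143}(k,q,\gamma)$.
   Context: For $\pi\in\{1234,2143\}$ define successor functions on integer triples. $\mathrm{suc}^{2143}(x,y,z)=\emptyset$ if $z\le0$ and for $z\ge1$, $\mathrm{suc}^{2143}(x,y,z)=\{(2,y{+}1,z),\ldots,(x{+}1,y{+}1,z)\}\cup\{(x,x{+}1,z),\ldots,(x,y,z)\}\cup\mathrm{suc}^{2143}(x,x,z{-}1)$. $\mathrm{suc}^{1234}(x,y,1)=\{(2,y{+}1,1),\ldots,(x{+}1,y{+}1,1)\}\cup\{(x,x{+}1,1),\ldots,(x,y,1)\}$ and for $z\ge2$, $\mathrm{suc}^{1234}(x,y,z)=\{(2,y{+}1,z),\ldots,(x{+}1,y{+}1,z)\}\cup\mathrm{suc}^{1234}(x,y,z{-}1)$ (sets of the form $\{(x,x{+}1,\cdot),\ldots,(x,y,\cdot)\}$ are empty if $y\le x$). A path in $\mathcal{P}^{\pi}$ is a finite sequence $P=(v_1,\ldots,v_r)$, $r\ge1$, of points of $\mathbb{Z}^3$ with $v_1=(x,y,z)$, $2\le x\le y$, $z\ge1$, and $v_{i+1}\in\mathrm{suc}^{\pi}(v_i)$; its length is $\ell(P)=r$. For $P\in\mathcal{P}^{2143}$, an edge from $(x_1,y_1,z_1)$ to $(x_2,y_2,z_2)$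 is recorded if either $z_1=z_2$ and $y_2=y_1+1$, or $z_1>z_2$. For $P\in\mathcal{P}^{1234}$, such an edge is recorded if $y_2=y_1+1$. The signature of $P$ is the tuple of the $x$-coordinate of $v_1$ followed by the $x$-coordinates of the endpoints of the recorded edges, in order. For $k\ge0$, $q\ge1$, $\gamma\in\mathbb{Z}^m$, $m\ge1$, $\mathcal{P}^{\pi}_{k,q,\gamma}$ is the set of paths in $\mathcal{P}^{\pi}$ starting at $(\gamma_1,\gamma_1+k,q)$ with signature $\gamma$, and $F^{\pi}(k,q,\gamma)=\sum_{P\in\mathcal{P}^{\pi}_{k,q,\gamma}}t^{\ell(P)-m}$, a formal power series in $t$. *)

(* Defs.v *)
From Stdlib Require Import ZArith List.
Import ListNotations.
Open Scope Z_scope.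

Definition pt : Type := (Z * Z * Z)%type.

Definition pt_eq_dec : forall u v : pt, {u = v} + {u <> v}.
Proof. decide equality; try apply Z.eq_dec; decide equality; apply Z.eq_dec. Defined.

(* integers a, a+1, ..., b  (empty if b < a) *)
Definition zrange (a b : Z) : list Z :=
  map (fun i => a + Z.of_nat i) (seq 0 (Z.to_nat (b - a + 1))).

Definition row (x y z : Z) : list pt := map (fun a => (a, y + 1, z)) (zrange 2 (x + 1)).
Definition col (x y z : Z) : list pt := map (fun b => (x, b, z)) (zrange (x + 1) y).

(* suc^{2143}(x,y,n) for n : nat viewed as z = n *)
Fixpoint suc2143n (x y : Z) (n : nat) : list pt :=
  match n with
  | O => []
  | S n' => row x y (Z.of_nat n) ++ col x y (Z.of_nat n) ++ suc2143n x x n'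
  end.

Definition suc2143 (v : pt) : list pt :=
  let '(x, y, z) := v in
  if z <=? 0 then [] else suc2143n x y (Z.to_nat z).

Fixpoint suc1234n (x y : Z) (n : nat) : list pt :=
  match n with
  | O => []
  | S O => row x y 1 ++ col x y 1
  | S n' => row x y (Z.of_nat n) ++ suc1234n x y n'
  end.

(* only defined for z >= 1 in the paper; z <= 0 never occurs on paths *)
Definition suc1234 (v : pt) : list pt :=
  let '(x, y, z) := v in
  if z <=? 0 then [] else suc1234n x y (Z.to_nat z).

Inductive perm_pat := P1234 | P2143.

Definition suc (pi : perm_pat) (v : pt) : list pt :=
  nodup pt_eq_dec (match pi with P1234 => suc1234 v | P2143 => suc2143 v end).

Fixpoint paths (pi : perm_pat) (v : pt) (r : nat) : list (list pt) :=
  match r with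
  | O => []
  | S O => [[v]]
  | S r' => flat_map (fun w => map (cons v) (paths pi w r')) (suc pi v)
  end.

Definition px (v : pt) : Z := let '(x, _, _) := v in x.
Definition py (v : pt) : Z := let '(_, y, _) := v in y.
Definition pz (v : pt) : Z := let '(_, _, z) := v in z.

Definition recorded (pi : perm_pat) (u w : pt) : bool :=
  match pi with
  | P2143 => ((pz u =? pz w) && (py w =? py u + 1)) || (pz w <? pz u)
  | P1234 => py w =? py u + 1
  end.

Fixpoint rec_ends (pi : perm_pat) (u : pt) (P : list pt) : list Z :=
  match P with
  | [] => []
  | w :: P' => (if recorded pi u w then [px w] else []) ++ rec_ends pi w P'
  end.

Definition signature (pi : perm_pat) (P : list pt) : list Z :=
  match P with
  | [] => []
  | v :: P' => px v :: rec_ends pi v P'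
  end.

Definition valid_start (v : pt) : bool :=
  let '(x, y, z) := v in (2 <=? x) && (x <=? y) && (1 <=? z).

(* Coefficient of t^n in F^pi(k,q,gamma) = sum_{P in P^pi_{k,q,gamma}} t^{l(P)-m}:
   the number of paths P of length n + m starting at (gamma_1, gamma_1 + k, q)
   with signature gamma (m = length gamma). Since every such path has
   length >= m, this determines the power series completely. *)
Definition Fcoef (pi : perm_pat) (k q : Z) (gamma : list Z) (n : nat) : nat :=
  let g1 := hd 0 gamma in
  let v := (g1, g1 + k, q) in
  if valid_start v then
    length (filter (fun P => if list_eq_dec Z.eq_dec (signature pi P) gamma
                             then true else false)
                   (paths pi v (n + length gamma)))
  else 0%nat.

(* Main.v *)
Require Import Defs.
From Stdlib Require Import ZArith List Lia Bool.
Import ListNotations.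
Open Scope Z_scope.

Fixpoint sumL {A : Type} (f : A -> nat) (l : list A) : nat :=
  match l with [] => 0%nat | w :: l' => (f w + sumL f l')%nat end.

Lemma sumL_app {A} (f : A -> nat) l1 l2 : sumL f (l1 ++ l2) = (sumL f l1 + sumL f l2)%nat.
Proof. induction l1; simpl; lia. Qed.

Lemma sumL_map {A B} (f : B -> nat) (g : A -> B) l : sumL f (map g l) = sumL (fun x => f (g x)) l.
Proof. induction l; simpl; congruence. Qed.

Lemma sumL_ext_in {A} (f g : A -> nat) l : (forall x, In x l -> f x = g x) -> sumL f l = sumL g l.
Proof. induction l; simpl; intros H; auto. Qed.

Lemma in_zrange lo hi b : In b (zrange lo hi) -> lo <= b <= hi.
Proof.
  unfold zrange. rewrite in_map_iff. intros [i [<- Hi]]. apply in_seq in Hi. lia.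
Qed.

Lemma zrange_NoDup lo hi : NoDup (zrange lo hi).
Proof.
  unfold zrange. apply NoDup_map_NoDup_ForallPairs.
  - intros i j _ _ H. lia.
  - apply seq_NoDup.
Qed.

Lemma zrange_empty x : zrange (x + 1) x = [].
Proof. unfold zrange. replace (x - (x+1) + 1) with 0 by lia. reflexivity. Qed.

Lemma zrange_snoc lo hi : lo <= hi + 1 -> zrange lo (hi + 1) = zrange lo hi ++ [hi + 1].
Proof.
  intros H. unfold zrange.
  replace (Z.to_nat (hi + 1 - lo + 1)) with (S (Z.to_nat (hi - lo + 1))) by lia.
  rewrite seq_S, map_app. simpl. f_equal. f_equal. lia.
Qed.

Ltac zb := repeat match goal with
 | H: (_ && _) = true |- _ => apply andb_true_iff in H; destruct H
 | H: (_ && _) = false |- _ => apply andb_false_iff in H; destruct H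
 | H: (_ <=? _) = true |- _ => apply Z.leb_le in H
 | H: (_ <=? _) = false |- _ => apply Z.leb_gt in H
 | H: (_ <? _) = true |- _ => apply Z.ltb_lt in H
 | H: (_ <? _) = false |- _ => apply Z.ltb_ge in H
 | H: (_ =? _) = true |- _ => apply Z.eqb_eq in H
 | H: (_ =? _) = false |- _ => apply Z.eqb_neq in H
 end.

Lemma sum_indicator (g : Z -> nat) a lo hi :
  sumL (fun a' => if Z.eq_dec a' a then g a' else 0%nat) (zrange lo hi)
  = if (lo <=? a) && (a <=? hi) then g a else 0%nat.
Proof.
  unfold zrange. rewrite sumL_map.
  assert (forall n s, sumL (fun i => if Z.eq_dec (lo + Z.of_nat i) a then g (lo + Z.of_nat i) else 0%nat) (seq s n)
     = if (lo + Z.of_nat s <=? a) && (a <? lo + Z.of_nat s + Z.of_nat n) then g a else 0%nat) as K.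
  { induction n; intros s; simpl.
    - destruct (_ <=? _) eqn:E1; destruct (_ <? _) eqn:E2; simpl; auto;
      rewrite ?Z.leb_le, ?Z.ltb_lt, ?Z.leb_gt, ?Z.ltb_ge in *; lia.
    - rewrite IHn. destruct (Z.eq_dec (lo + Z.of_nat s) a); [subst|];
      repeat match goal with |- context [if ?c then _ else _] => destruct c eqn:? end; zb; simpl; try lia. }
  rewrite K. 
  repeat match goal with |- context [if ?c then _ else _] => destruct c eqn:? end; zb; simpl; try lia.
Qed.

Lemma in_row x y z w : In w (row x y z) -> exists a, w = (a, y + 1, z).
Proof. unfold row. rewrite in_map_iff. intros [a [<- _]]. eauto. Qed.

Lemma in_col x y z w : In w (col x y z) -> exists b, w = (x, b, z) /\ x + 1 <= b <= y.
Proof. unfold col. rewrite in_map_iff. intros [b [<- H]]. apply in_zrange in H. eauto. Qed.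

Lemma row_NoDup x y z : NoDup (row x y z).
Proof.
  unfold row. apply NoDup_map_NoDup_ForallPairs.
  - intros i j _ _ H. congruence.
  - apply zrange_NoDup.
Qed.

Lemma col_NoDup x y z : NoDup (col x y z).
Proof.
  unfold col. apply NoDup_map_NoDup_ForallPairs.
  - intros i j _ _ H. congruence.
  - apply zrange_NoDup.
Qed.

Lemma in_suc1234n x y n w : In w (suc1234n x y n) -> 1 <= pz w <= Z.of_nat n.
Proof.
  induction n as [|n IH]; simpl; [tauto|].
  destruct n as [|n].
  - rewrite in_app_iff. intros [H|H]; [apply in_row in H|apply in_col in H]; firstorder; subst; simpl; lia.
  - rewrite in_app_iff. intros [H|H].
    + apply in_row in H. destruct H; subst; simpl; lia.
    + apply IH in H. lia.
Qed.

Lemma in_suc2143n x y n w : In w (suc2143n x y n) -> 1 <= pz w <= Z.of_nat n.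
Proof.
  revert y. induction n as [|n IH]; intros y; simpl; [tauto|].
  rewrite !in_app_iff. intros [H|[H|H]].
  - apply in_row in H. destruct H; subst; simpl; lia.
  - apply in_col in H. firstorder; subst; simpl; lia.
  - apply IH in H. lia.
Qed.

Lemma suc1234n_NoDup x y n : NoDup (suc1234n x y n).
Proof.
  induction n as [|n IH]; simpl; [constructor|].
  destruct n as [|n].
  - apply NoDup_app; [apply row_NoDup|apply col_NoDup|].
    intros w H1 H2. apply in_row in H1. apply in_col in H2. destruct H1 as [a1 E1]; destruct H2 as [b [E2 Hb]]. subst. inversion E2; lia.
  - apply NoDup_app; [apply row_NoDup|exact IH|].
    intros w H1 H2. apply in_row in H1. apply in_suc1234n in H2. destruct H1; subst; simpl in *; lia.
Qed.

Lemma suc2143n_NoDup x y n : NoDup (suc2143n x y n).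
Proof.
  revert y. induction n as [|n IH]; intros y; simpl; [constructor|].
  apply NoDup_app; [apply row_NoDup| |].
  - apply NoDup_app; [apply col_NoDup|apply IH|].
    intros w H1 H2. apply in_col in H1. apply in_suc2143n in H2. firstorder; subst; simpl in *; lia.
  - intros w H1 H2. apply in_row in H1. destruct H1; subst. rewrite in_app_iff in H2. destruct H2 as [H2|H2].
    + apply in_col in H2. destruct H2 as [b [E2 Hb]]. inversion E2; lia.
    + apply in_suc2143n in H2. simpl in *; lia.
Qed.

Definition st (x y : Z) (z : nat) : pt := (x, y, Z.of_nat z).

Lemma suc1234_st x y z : (1 <= z)%nat -> suc P1234 (st x y z) = suc1234n x y z.
Proof.
  intros Hz. unfold suc, suc1234, st.
  replace (Z.of_nat z <=? 0) with false by (symmetry; apply Z.leb_gt; lia).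
  rewrite Nat2Z.id. apply nodup_fixed_point, suc1234n_NoDup.
Qed.

Lemma suc2143_st x y z : (1 <= z)%nat -> suc P2143 (st x y z) = suc2143n x y z.
Proof.
  intros Hz. unfold suc, suc2143, st.
  replace (Z.of_nat z <=? 0) with false by (symmetry; apply Z.leb_gt; lia).
  rewrite Nat2Z.id. apply nodup_fixed_point, suc2143n_NoDup.
Qed.

Definition stepT (C : pt -> list Z -> nat) (pi : perm_pat) (v : pt) (R : list Z) (w : pt) : nat :=
  if recorded pi v w then
    match R with [] => 0%nat | a :: R' => if Z.eq_dec (px w) a then C w R' else 0%nat end
  else C w R.

Fixpoint C (pi : perm_pat) (v : pt) (R : list Z) (r : nat) {struct r} : nat :=
  match r with
  | O => O
  | S r' => match r' with
    | O => match R with [] => 1%nat | _ => 0%nat end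
    | S _ => sumL (stepT (fun w R => C pi w R r') pi v R) (suc pi v)
    end
  end.

Definition mt (pi : perm_pat) (v : pt) (R : list Z) (Q : list pt) : bool :=
  if list_eq_dec Z.eq_dec (rec_ends pi v Q) R then true else false.

Lemma paths_head pi w r Q : In Q (paths pi w r) -> Q = w :: tl Q.
Proof.
  destruct r as [|[|r]]; simpl; [tauto| intros [<-|[]]; auto |].
  rewrite in_flat_map. intros [u [_ H]]. rewrite in_map_iff in H. destruct H as [Q' [<- _]]. auto.
Qed.

Lemma len_filter_flat_map {A B} (p : B -> bool) (g : A -> list B) l :
  length (filter p (flat_map g l)) = sumL (fun w => length (filter p (g w))) l.
Proof. induction l; simpl; auto. rewrite filter_app, length_app. congruence. Qed.

Lemma len_filter_map_cons {A} (p : list A -> bool) v L :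
  length (filter p (map (cons v) L)) = length (filter (fun Q => p (v :: Q)) L).
Proof. induction L; simpl; auto. destruct (p (v :: a)); simpl; congruence. Qed.

Lemma len_filter_false {A} (p : A -> bool) L : (forall Q, In Q L -> p Q = false) -> length (filter p L) = 0%nat.
Proof. induction L; simpl; intros H; auto. rewrite H; auto. Qed.

Lemma mt_cons pi v R w Q : mt pi v R (w :: Q) =
  if recorded pi v w then match R with [] => false | a :: R' => (if Z.eq_dec (px w) a then mt pi w R' Q else false) end
  else mt pi w R Q.
Proof.
  unfold mt. cbn [rec_ends]. destruct (recorded pi v w); cbn [app].
  - destruct R as [|a R'].
    + destruct list_eq_dec; [discriminate|auto].
    + destruct (Z.eq_dec (px w) a); destruct (list_eq_dec Z.eq_dec (px w :: rec_ends pi w Q) (a :: R'));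
      try destruct (list_eq_dec Z.eq_dec (rec_ends pi w Q) R'); congruence.
  - reflexivity.
Qed.

Lemma cnt_C pi r : forall v R,
  length (filter (fun Q => mt pi v R (tl Q)) (paths pi v r)) = C pi v R r.
Proof.
  induction r as [|r IH]; intros v R; [simpl; reflexivity|].
  destruct r as [|r].
  - simpl. unfold mt. simpl. destruct R; simpl; auto.
  - change (paths pi v (S (S r))) with (flat_map (fun w => map (cons v) (paths pi w (S r))) (suc pi v)).
    change (C pi v R (S (S r))) with (sumL (stepT (fun w R => C pi w R (S r)) pi v R) (suc pi v)).
    rewrite len_filter_flat_map. apply sumL_ext_in. intros w _.
    rewrite len_filter_map_cons. simpl tl. unfold stepT.
    destruct (recorded pi v w) eqn:Er.
    + destruct R as [|a R'].
      * apply len_filter_false. intros Q HQ. rewrite (paths_head _ _ _ _ HQ). rewrite mt_cons, Er. auto.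
      * destruct (Z.eq_dec (px w) a).
        -- rewrite <- IH. f_equal. apply filter_ext_in. intros Q HQ. rewrite (paths_head _ _ _ _ HQ). rewrite mt_cons, Er.
           destruct Z.eq_dec; [reflexivity|congruence].
        -- apply len_filter_false. intros Q HQ. rewrite (paths_head _ _ _ _ HQ). rewrite mt_cons, Er.
           destruct Z.eq_dec; [congruence|auto].
    + rewrite <- IH. f_equal. apply filter_ext_in. intros Q HQ. rewrite (paths_head _ _ _ _ HQ). rewrite mt_cons, Er.
      reflexivity.
Qed.
Lemma Fcoef_C pi k q g1 R n :
  Fcoef pi k q (g1 :: R) n =
  if valid_start (g1, g1 + k, q) then C pi (g1, g1 + k, q) R (n + S (length R)) else 0%nat.
Proof.
  unfold Fcoef. cbn [hd length]. destruct (valid_start (g1, g1 + k, q)); auto.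
  rewrite <- cnt_C. f_equal. apply filter_ext_in. intros P HP.
  assert (HP' := paths_head _ _ _ _ HP). rewrite HP'. unfold signature, mt.
  
  change (px (g1, g1 + k, q)) with g1. change (tl ((g1, g1 + k, q) :: tl P)) with (tl P). destruct (list_eq_dec Z.eq_dec (g1 :: rec_ends pi (g1, g1 + k, q) (tl P)) (g1 :: R)); destruct (list_eq_dec Z.eq_dec (rec_ends pi (g1, g1 + k, q) (tl P)) R); congruence.
Qed.

Definition rowT pi x y (z : nat) R r : nat :=
  match R with [] => 0%nat | a :: R' => if (2 <=? a) && (a <=? x + 1) then C pi (st a (y + 1) z) R' (S r) else 0%nat end.
Definition colS pi x y (z : nat) R r : nat := sumL (fun b => C pi (st x b z) R (S r)) (zrange (x + 1) y).
Fixpoint sumz (g : nat -> nat) (n : nat) : nat :=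
  match n with O => O | S n' => (g (S n') + sumz g n')%nat end.

Definition F pi r := fun w R => C pi w R (S r).

Lemma sumL_zero {A} (l : list A) : sumL (fun _ => 0%nat) l = 0%nat.
Proof. induction l; simpl; auto. Qed.

Lemma sum_row pi v x y zz R r :
  (forall w, In w (row x y (Z.of_nat zz)) -> recorded pi v w = true) ->
  sumL (stepT (F pi r) pi v R) (row x y (Z.of_nat zz)) = rowT pi x y zz R r.
Proof.
  intros H. rewrite (sumL_ext_in _ (fun w => match R with [] => 0%nat | a :: R' =>
     if Z.eq_dec (px w) a then C pi w R' (S r) else 0%nat end)).
  2:{ intros w Hw. unfold stepT. rewrite H; auto. }
  unfold row. rewrite sumL_map. destruct R as [|a R'].
  - apply sumL_zero.
  - unfold rowT. rewrite (sum_indicator (fun a' => C pi (a', y + 1, Z.of_nat zz) R' (S r))). reflexivity.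
Qed.

Lemma sum_col pi v x y zz R r :
  (forall w, In w (col x y (Z.of_nat zz)) -> recorded pi v w = false) ->
  sumL (stepT (F pi r) pi v R) (col x y (Z.of_nat zz)) = colS pi x y zz R r.
Proof.
  intros H. rewrite (sumL_ext_in _ (fun w => C pi w R (S r))).
  2:{ intros w Hw. unfold stepT. rewrite H; auto. }
  unfold col, colS. rewrite sumL_map. reflexivity.
Qed.

Lemma C_SS pi v R r : C pi v R (S (S r)) = sumL (stepT (F pi r) pi v R) (suc pi v).
Proof. reflexivity. Qed.

Lemma rec1234_aux x y z0 R r n : (1 <= n)%nat ->
  sumL (stepT (F P1234 r) P1234 (st x y z0) R) (suc1234n x y n)
  = (sumz (fun zz => rowT P1234 x y zz R r) n + colS P1234 x y 1 R r)%nat.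
Proof.
  induction n as [|n IH]; intros Hn; [lia|].
  destruct n as [|n].
  - change (suc1234n x y 1) with (row x y (Z.of_nat 1) ++ col x y (Z.of_nat 1)).
    rewrite sumL_app, sum_row, sum_col; simpl; try lia.
    + intros w Hw. apply in_col in Hw. destruct Hw as [b [-> Hb]]. simpl. apply Z.eqb_neq. lia.
    + intros w Hw. apply in_row in Hw. destruct Hw as [a ->]. simpl. apply Z.eqb_eq. lia.
  - change (suc1234n x y (S (S n))) with (row x y (Z.of_nat (S (S n))) ++ suc1234n x y (S n)).
    rewrite sumL_app, IH by lia. rewrite sum_row. simpl sumz. lia.
    intros w Hw. apply in_row in Hw. destruct Hw as [a ->]. simpl. apply Z.eqb_eq. lia.
Qed.

Lemma rec1234 x y z R r : (1 <= z)%nat ->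
  C P1234 (st x y z) R (S (S r)) = (sumz (fun zz => rowT P1234 x y zz R r) z + colS P1234 x y 1 R r)%nat.
Proof. intros Hz. rewrite C_SS, suc1234_st by auto. apply rec1234_aux; auto. Qed.

Lemma col_empty x z : col x x z = [].
Proof. unfold col. rewrite zrange_empty. reflexivity. Qed.

Lemma rec2143_aux x y z R r n : (n <= z)%nat ->
  sumL (stepT (F P2143 r) P2143 (st x y (S z)) R) (suc2143n x x n)
  = sumz (fun zz => rowT P2143 x x zz R r) n.
Proof.
  induction n as [|n IH]; intros Hn; [reflexivity|].
  change (suc2143n x x (S n)) with (row x x (Z.of_nat (S n)) ++ col x x (Z.of_nat (S n)) ++ suc2143n x x n).
  rewrite col_empty, app_nil_l. rewrite sumL_app, IH by lia. rewrite sum_row. simpl sumz. lia.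
  intros w Hw. apply in_row in Hw. destruct Hw as [a ->]. simpl. apply orb_true_iff. right. apply Z.ltb_lt. lia.
Qed.

Lemma rec2143 x y z R r :
  C P2143 (st x y (S z)) R (S (S r)) =
  (rowT P2143 x y (S z) R r + colS P2143 x y (S z) R r + sumz (fun zz => rowT P2143 x x zz R r) z)%nat.
Proof.
  rewrite C_SS, suc2143_st by lia.
  change (suc2143n x y (S z)) with (row x y (Z.of_nat (S z)) ++ col x y (Z.of_nat (S z)) ++ suc2143n x x z).
  rewrite !sumL_app, rec2143_aux by lia. rewrite sum_row, sum_col.
  - lia.
  - intros w Hw. apply in_col in Hw. destruct Hw as [b [-> Hb]]. unfold st. cbn [recorded pz py px].
    rewrite Z.eqb_refl. simpl andb. apply orb_false_iff. split; [apply Z.eqb_neq; lia| apply Z.ltb_ge; lia].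
  - intros w Hw. apply in_row in Hw. destruct Hw as [a ->]. unfold st. cbn [recorded pz py px].
    rewrite Z.eqb_refl. simpl andb. apply orb_true_iff. left. apply Z.eqb_eq. lia.
Qed.

Lemma sumz_ext f g n : (forall i, (1 <= i <= n)%nat -> f i = g i) -> sumz f n = sumz g n.
Proof. induction n; simpl; intros H; auto. rewrite H by lia. rewrite IHn; auto. intros; apply H; lia. Qed.

Lemma sumz_zero n : sumz (fun _ => 0%nat) n = 0%nat.
Proof. induction n; simpl; auto. Qed.

Lemma sumz_add f g n : sumz (fun i => (f i + g i)%nat) n = (sumz f n + sumz g n)%nat.
Proof. induction n; simpl; auto. rewrite IHn; lia. Qed.

Lemma sumz_shift g n : sumz g (S n) = (g 1%nat + sumz (fun i => g (S i)) n)%nat.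
Proof. induction n; simpl; auto. simpl in IHn. lia. Qed.

Lemma sumL_add {A} (f g : A -> nat) l : sumL (fun b => (f b + g b)%nat) l = (sumL f l + sumL g l)%nat.
Proof. induction l; simpl; auto. rewrite IHl; lia. Qed.

Lemma sum_exch {A} (g : A -> nat -> nat) l n :
  sumL (fun b => sumz (g b) n) l = sumz (fun i => sumL (fun b => g b i) l) n.
Proof.
  induction n; simpl.
  - apply sumL_zero.
  - rewrite sumL_add, IHn. reflexivity.
Qed.

Lemma sumL_shift (f : Z -> nat) lo hi : sumL f (zrange (lo + 1) (hi + 1)) = sumL (fun b => f (b + 1)) (zrange lo hi).
Proof.
  unfold zrange. rewrite !sumL_map. replace (hi + 1 - (lo + 1) + 1) with (hi - lo + 1) by lia.
  apply sumL_ext_in. intros i _. f_equal. lia.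
Qed.

Lemma C1 pi pi' v v' R : C pi v R 1 = C pi' v' R 1.
Proof. reflexivity. Qed.

Notation A x y z R r := (C P1234 (st x y z) R r).
Notation B x y z R r := (C P2143 (st x y z) R r).

Lemma LC r : forall x y w R, x < y -> (1 <= w)%nat ->
  A x y w R (S r) = (A x (y - 1) w R (S r) + A x y (S w) R r)%nat.
Proof.
  induction r as [|r IH]; intros x y w R Hxy Hw.
  - simpl. lia.
  - rewrite !rec1234 by lia.
    assert (Hc : colS P1234 x y 1 R r = (colS P1234 x (y - 1) 1 R r + A x y 1 R (S r))%nat).
    { unfold colS. replace y with (y - 1 + 1) at 1 by lia. rewrite zrange_snoc by lia. rewrite sumL_app. simpl.
      replace (y - 1 + 1) with y by lia. lia. }
    rewrite Hc.
    rewrite (sumz_ext (fun zz => rowT P1234 x y zz R r)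
       (fun zz => (rowT P1234 x (y - 1) zz R r + match R with [] => 0%nat | a :: R' =>
           if ((2 <=? a) && (a <=? x + 1))%Z then A a (y + 1) (S zz) R' r else 0%nat end)%nat)).
    2:{ intros i Hi. unfold rowT. destruct R as [|a R']; auto.
        destruct ((2 <=? a) && (a <=? x + 1)) eqn:E; auto. zb.
        rewrite IH by lia. replace (y + 1 - 1) with (y - 1 + 1) by lia. reflexivity. }
    rewrite sumz_add.
    enough (sumz (fun zz => match R with [] => 0%nat | a :: R' =>
           if ((2 <=? a) && (a <=? x + 1))%Z then A a (y + 1) (S zz) R' r else 0%nat end) w + A x y 1 R (S r)
           = A x y (S w) R (S r))%nat by lia.
    destruct r as [|r].
    + rewrite (sumz_ext _ (fun _ => 0%nat)).
      * rewrite sumz_zero. simpl. destruct R; reflexivity.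
      * intros i _. destruct R as [|a R']; auto. destruct (_ && _); auto.
    + assert (sumz (fun zz => match R with [] => 0%nat | a :: R' =>
           if ((2 <=? a) && (a <=? x + 1))%Z then A a (y + 1) (S zz) R' (S r) else 0%nat end) w
           = sumz (fun i => rowT P1234 x y (S i) R r) w) as ->.
      { apply sumz_ext. intros i _. reflexivity. }
      rewrite !rec1234 by lia. rewrite (sumz_shift _ w). cbn [sumz]. lia.
Qed.

Lemma Tel d : forall a c w R r, a <= c -> (1 <= w)%nat ->
  A a (c + Z.of_nat d) w R (S r) =
  (A a c w R (S r) + sumL (fun b => A a b (S w) R r) (zrange (c + 1) (c + Z.of_nat d)))%nat.
Proof.
  induction d as [|d IH]; intros a c w R r Hac Hw.
  - replace (c + Z.of_nat 0) with c by lia. rewrite zrange_empty. simpl. lia.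
  - replace (c + Z.of_nat (S d)) with (c + Z.of_nat d + 1) by lia.
    rewrite LC by lia. replace (c + Z.of_nat d + 1 - 1) with (c + Z.of_nat d) by lia.
    rewrite IH by lia. rewrite zrange_snoc by lia. rewrite sumL_app. simpl. lia.
Qed.

Lemma Qid x y z R r : x <= y ->
  (sumz (fun zz => rowT P1234 x y zz R r) z + colS P1234 x y 1 R r
  = colS P1234 x y (S z) R r + sumz (fun zz => rowT P1234 x x zz R r) z)%nat.
Proof.
  intros Hxy. destruct r as [|r].
  - rewrite (sumz_ext (fun zz => rowT P1234 x y zz R 0) (fun zz => rowT P1234 x x zz R 0)).
    2:{ intros; unfold rowT; destruct R; auto; destruct (_ && _); reflexivity. }
    assert (colS P1234 x y 1 R 0 = colS P1234 x y (S z) R 0) as -> by reflexivity. lia.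
  - unfold colS at 1 2.
    rewrite (sumL_ext_in (fun b => A x b 1 R (S (S r)))
      (fun b => (rowT P1234 x b 1 R r + colS P1234 x b 1 R r)%nat)).
    2:{ intros b Hb. apply in_zrange in Hb. rewrite rec1234 by lia. simpl. lia. }
    rewrite (sumL_ext_in (fun b => A x b (S z) R (S (S r)))
      (fun b => (rowT P1234 x b 1 R r + colS P1234 x b 1 R r + sumz (fun i => rowT P1234 x b (S i) R r) z)%nat)).
    2:{ intros b Hb. apply in_zrange in Hb. rewrite rec1234 by lia. rewrite sumz_shift. lia. }
    rewrite !sumL_add, sum_exch.
    enough (sumz (fun zz => rowT P1234 x y zz R (S r)) z =
      (sumz (fun zz => rowT P1234 x x zz R (S r)) z + sumz (fun i => sumL (fun b => rowT P1234 x b (S i) R r) (zrange (x + 1) y)) z)%nat)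
      by lia.
    rewrite <- sumz_add. apply sumz_ext. intros i Hi.
    unfold rowT at 1 2. destruct R as [|a R'].
    + symmetry. etransitivity; [|apply (sumL_zero (zrange (x + 1) y))]. apply sumL_ext_in. intros. reflexivity.
    + destruct ((2 <=? a) && (a <=? x + 1)) eqn:E.
      * pose proof E as E0; apply andb_true_iff in E0; destruct E0 as [E1 E2]; apply Z.leb_le in E1, E2. assert (y + 1 = (x + 1) + Z.of_nat (Z.to_nat (y - x))) as -> by lia.
        rewrite Tel by lia. f_equal. replace (x + 1 + Z.of_nat (Z.to_nat (y - x))) with (y + 1) by lia.
        rewrite sumL_shift. apply sumL_ext_in. intros b _. unfold rowT. rewrite E. reflexivity.
      * symmetry. etransitivity; [|apply (sumL_zero (zrange (x + 1) y))]. apply sumL_ext_in. intros.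
        unfold rowT. rewrite E. reflexivity.
Qed.

Definition PM r := forall x y z R, x <= y -> (1 <= z)%nat -> A x y z R r = B x y z R r.

Lemma main_eq r : PM r /\ PM (S r).
Proof.
  induction r as [|r [IH1 IH2]].
  - split; intros x y z R _ _; reflexivity.
  - split; auto. intros x y z R Hxy Hz.
    destruct z as [|z]; [lia|].
    rewrite rec1234, rec2143 by lia.
    assert (HR : forall y' zz, x <= y' -> (1 <= zz)%nat -> rowT P1234 x y' zz R r = rowT P2143 x y' zz R r).
    { intros y' zz Hy Hzz. unfold rowT. destruct R as [|a R']; auto.
      destruct (_ && _) eqn:E; auto. zb. apply IH2; lia. }
    assert (HC : forall zz, (1 <= zz)%nat -> colS P1234 x y zz R r = colS P2143 x y zz R r).
    { intros zz Hzz. unfold colS. apply sumL_ext_in. intros b Hb. apply in_zrange in Hb. apply IH2; lia. }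
    rewrite <- HR, <- HC by lia.
    rewrite (sumz_ext (fun zz => rowT P2143 x x zz R r) (fun zz => rowT P1234 x x zz R r)).
    2:{ intros; symmetry; apply HR; lia. }
    rewrite sumz_shift. 
    destruct z as [|z].
    + simpl. lia.
    + pose proof (Qid x y (S z) R r Hxy) as Q.
      rewrite sumz_shift in Q. simpl sumz in *. lia.
Qed.

Theorem lemma3p6 (k q : Z) (gamma : list Z) :
  0 <= k -> 1 <= q -> (1 <= length gamma)%nat ->
  2 <= nth 0 gamma 0 ->
  (forall i : nat, (i + 1 < length gamma)%nat ->
     2 <= nth (i + 1) gamma 0 <= nth i gamma 0 + 1) ->
  forall n : nat, Fcoef P1234 k q gamma n = Fcoef P2143 k q gamma n.
Proof.
  intros Hk Hq Hl _ _ n.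
  destruct gamma as [|g1 R]; [simpl in Hl; lia|].
  rewrite !Fcoef_C.
  destruct (valid_start (g1, g1 + k, q)) eqn:V; auto.
  replace q with (Z.of_nat (Z.to_nat q)) by lia.
  apply (proj1 (main_eq _)); lia.
Qed.
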